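(* Let $\mathcal{E}_1=[\theta_1,u_1]$ and $\mathcal{E}_2=[\theta_2,u_2]$ be interval effect algebras, each generating its ordered linear space, each having an order-determining set of states, and each unrestricted. Let $\mathcal{I}$ be an operation from $\mathcal{E}_1$ to $\mathcal{E}_2$. Then: (i) there exists a unique affine map $\mathcal{I}^*\colon\mathcal{E}_2\to\mathcal{E}_1$ such that $s[\mathcal{I}^*(a)]=\mathcal{I}(s)(a)$ for all $s\in\mathcal{S}(\mathcal{E}_1)$ and all $a\in\mathcal{E}_2$; (ii) $\mathcal{I}$ is a channel if and only if $\mathcal{I}^*(u_2)=u_1$.
   Context: Let $V$ be a real vector space with zero $\theta$ and $K\subseteq V$ a positive cone ($\mathbb{R}^+K\subseteq K$, $K+K\subseteq K$, $K\cap(-K)=\{\theta\}$), with partial order $x\le y$ iff $y-x\in K$. For $u\in K$, $u\ne\theta$, the interval effect algebra is $\mathcal{E}=[\theta,u]=\{x\in K: x\le u\}$; for $a,b\in\mathcal{E}$ write $a\perp b$ if $a+b\le u$ (then $a+b\in\mathcal{E}$). $\mathcal{E}$ generates $V$ means $K=\mathbb{R}^+\mathcal{E}$ and $V=K-K$. A state on $\mathcal{E}$ is a map $s\colon\mathcal{E}\to[0,1]$ with $s(u)=1$ and $s(a+b)=s(a)+s(b)$ whenever $a\perp b$; $\mathcal{S}(\mathcal{E})$ denotes the (convex) set of all states. The states are order-determining: for $a,b\in\mathcal{E}$, $a\le b$ iff $s(a)\le s(b)$ for all $s\in\mathcal{S}(\mathcal{E})$. A map between convex sets is affine if it preserves finite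 convex combinations. $\mathcal{E}$ is unrestricted if for every affine $f\colon\mathcal{S}(\mathcal{E})\to[0,1]$ there is $a\in\mathcal{E}$ with $f(s)=s(a)$ for all $s\in\mathcal{S}(\mathcal{E})$. A substate on $\mathcal{E}$ is a function $f=\lambda s$ on $\mathcal{E}$ with $\lambda\in[0,1]$, $s\in\mathcal{S}(\mathcal{E})$; $\mathrm{Sub}(\mathcal{S}(\mathcal{E}))$ is the set of substates. An operation from $\mathcal{E}_1$ to $\mathcal{E}_2$ is an affine map $\mathcal{I}\colon\mathcal{S}(\mathcal{E}_1)\to\mathrm{Sub}(\mathcal{S}(\mathcal{E}_2))$ (convex combinations of substates taken pointwise); it is a channel if $\mathcal{I}(s)\in\mathcal{S}(\mathcal{E}_2)$ for all $s\in\mathcal{S}(\mathcal{E}_1)$. *)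

(* Defs.v *)
From HB Require Import structures.
From mathcomp Require Import all_boot all_order all_algebra.
From mathcomp Require Import reals.
Set Implicit Arguments. Unset Strict Implicit. Unset Printing Implicit Defensive.
Import Order.TTheory GRing.Theory Num.Theory.
Local Open Scope ring_scope.

Section EffectAlgebras.
Variables (R : realType) (V : lmodType R).

Definition positive_cone (K : V -> Prop) : Prop :=
  [/\ (forall (r : R) x, 0 <= r -> K x -> K (r *: x)),
      (forall x y, K x -> K y -> K (x + y)) &
      (forall x, K x -> K (- x) -> x = 0)].

Definition cone_le (K : V -> Prop) (x y : V) : Prop := K (y - x).

Definition eff_interval (K : V -> Prop) (u : V) (x : V) : Prop :=
  K x /\ cone_le K x u.

Definition generates (K : V -> Prop) (u : V) : Prop :=
  (forall x, K x <-> exists (r : R) a, 0 <= r /\ eff_interval K u a /\ x = r *: a) /\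
  (forall v, exists k1 k2, K k1 /\ K k2 /\ v = k1 - k2).

(* States: maps E -> [0,1]; encoded as functions V -> R that vanish off E,
   so that each state has a unique representative. *)
Definition is_state (K : V -> Prop) (u : V) (s : V -> R) : Prop :=
  [/\ (forall x, eff_interval K u x -> 0 <= s x <= 1),
      s u = 1,
      (forall a b, eff_interval K u a -> eff_interval K u b -> cone_le K (a + b) u ->
          s (a + b) = s a + s b) &
      (forall x, ~ eff_interval K u x -> s x = 0)].

Definition order_determining (K : V -> Prop) (u : V) : Prop :=
  forall a b, eff_interval K u a -> eff_interval K u b ->
    (cone_le K a b <-> forall s, is_state K u s -> s a <= s b).

Definition fconv (t : R) (f g : V -> R) : V -> R :=
  fun x => t * f x + (1 - t) * g x.

Definition unrestricted (K : V -> Prop) (u : V) : Prop :=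
  forall f : (V -> R) -> R,
    (forall s, is_state K u s -> 0 <= f s <= 1) ->
    (forall s1 s2 (t : R), is_state K u s1 -> is_state K u s2 -> 0 <= t <= 1 ->
        f (fconv t s1 s2) = t * f s1 + (1 - t) * f s2) ->
    exists a, eff_interval K u a /\ forall s, is_state K u s -> f s = s a.

Definition is_substate (K : V -> Prop) (u : V) (f : V -> R) : Prop :=
  exists (l : R) s, 0 <= l <= 1 /\ is_state K u s /\ f = (fun x => l * s x).

End EffectAlgebras.

Definition is_operation (R : realType) (V1 V2 : lmodType R)
  (K1 : V1 -> Prop) (u1 : V1) (K2 : V2 -> Prop) (u2 : V2)
  (I : (V1 -> R) -> (V2 -> R)) : Prop :=
  (forall s, is_state K1 u1 s -> is_substate K2 u2 (I s)) /\
  (forall s1 s2 (t : R), is_state K1 u1 s1 -> is_state K1 u1 s2 -> 0 <= t <= 1 ->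
      I (fconv t s1 s2) = fconv t (I s1) (I s2)).

Definition is_channel (R : realType) (V1 V2 : lmodType R)
  (K1 : V1 -> Prop) (u1 : V1) (K2 : V2 -> Prop) (u2 : V2)
  (I : (V1 -> R) -> (V2 -> R)) : Prop :=
  is_operation K1 u1 K2 u2 I /\ (forall s, is_state K1 u1 s -> is_state K2 u2 (I s)).

Definition affine_between (R : realType) (V1 V2 : lmodType R)
  (K2 : V2 -> Prop) (u2 : V2) (K1 : V1 -> Prop) (u1 : V1) (J : V2 -> V1) : Prop :=
  (forall a, eff_interval K2 u2 a -> eff_interval K1 u1 (J a)) /\
  (forall a b (t : R), eff_interval K2 u2 a -> eff_interval K2 u2 b -> 0 <= t <= 1 ->
      J (t *: a + (1 - t) *: b) = t *: J a + (1 - t) *: J b).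

Definition dual_of (R : realType) (V1 V2 : lmodType R)
  (K1 : V1 -> Prop) (u1 : V1) (K2 : V2 -> Prop) (u2 : V2)
  (I : (V1 -> R) -> (V2 -> R)) (J : V2 -> V1) : Prop :=
  affine_between K2 u2 K1 u1 J /\
  (forall s a, is_state K1 u1 s -> eff_interval K2 u2 a -> s (J a) = I s a).

Arguments positive_cone {R V} K.
Arguments cone_le {R V} K x y.
Arguments eff_interval {R V} K u x.
Arguments generates {R V} K u.
Arguments is_state {R V} K u s.
Arguments order_determining {R V} K u.
Arguments fconv {R V} t f g _.
Arguments unrestricted {R V} K u.
Arguments is_substate {R V} K u f.
Arguments is_operation {R V1 V2} K1 u1 K2 u2 I.
Arguments is_channel {R V1 V2} K1 u1 K2 u2 I.
Arguments affine_between {R V1 V2} K2 u2 K1 u1 J.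
Arguments dual_of {R V1 V2} K1 u1 K2 u2 I J.

(* Main.v *)
Require Import Defs.
From HB Require Import structures.
From mathcomp Require Import all_boot all_order all_algebra.
From mathcomp Require Import reals.
From mathcomp Require Import ring lra.
From Stdlib Require Import Classical ClassicalEpsilon FunctionalExtensionality.
Import Order.TTheory GRing.Theory Num.Theory.
Local Open Scope ring_scope.
Set Implicit Arguments. Unset Strict Implicit.

Lemma small0 (R : realType) (d : R) : (forall n : nat, `|d| <= 1 / n.+1%:R) -> d = 0.
Proof.
move=> H; apply/eqP; apply/negPn/negP => nd.
have dp : 0 < `|d| by rewrite normr_gt0.
set n := Num.truncn (1 / `|d|).
have := truncnS_gt (1 / `|d|); rewrite -/n => h.
have := H n.
rewrite ler_pdivlMr ?ltr0n // => h2.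
have : 1 / `|d| * `|d| < n.+1%:R * `|d| by rewrite ltr_pM2r.
rewrite mulrC mulrA mulr1 divff ?gt_eqF //.
rewrite mulrC; lra.
Qed.

Lemma small0' (R : realType) (d : R) : (forall n : nat, `|n.+1%:R * d| <= 1) -> d = 0.
Proof.
move=> H; apply/eqP; apply/negPn/negP => nd.
have dp : 0 < `|d| by rewrite normr_gt0.
set n := Num.truncn (1 / `|d|).
have := truncnS_gt (1 / `|d|); rewrite -/n => h.
have := H n.
rewrite normrM ger0_norm ?ler0n // => h2.
have : 1 / `|d| * `|d| < n.+1%:R * `|d| by rewrite ltr_pM2r.
rewrite mulrC mulrA mulr1 divff ?gt_eqF //.
lra.
Qed.

Section St.
Variables (R : realType) (V : lmodType R) (K : V -> Prop) (u : V).
Hypothesis hK : positive_cone K.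
Hypothesis huK : K u.

Lemma Kscale r x : 0 <= r -> K x -> K (r *: x).
Proof. by case: hK => h _ _; apply: h. Qed.
Lemma Kadd x y : K x -> K y -> K (x + y).
Proof. by case: hK => _ h _; apply: h. Qed.
Lemma K0 : K 0.
Proof. by rewrite -(scale0r u); apply: Kscale. Qed.

Lemma E0 : eff_interval K u 0.
Proof. split; [exact: K0| by rewrite /cone_le subr0]. Qed.
Lemma Eu : eff_interval K u u.
Proof. split=> //; rewrite /cone_le subrr; exact: K0. Qed.

Lemma E_scale r x : 0 <= r <= 1 -> eff_interval K u x -> eff_interval K u (r *: x).
Proof.
case/andP=> r0 r1 [kx lx]; split; first exact: Kscale.
rewrite /cone_le.
have -> : u - r *: x = (u - x) + (1 - r) *: x by rewrite scalerBl scale1r addrA subrK.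
by apply: Kadd => //; apply: Kscale; rewrite ?subr_ge0.
Qed.

Lemma E_conv t x y : 0 <= t <= 1 -> eff_interval K u x -> eff_interval K u y ->
  eff_interval K u (t *: x + (1 - t) *: y).
Proof.
case/andP=> t0 t1 [kx lx] [ky ly]; split.
  by apply: Kadd; apply: Kscale; rewrite ?subr_ge0.
rewrite /cone_le.
have -> : u - (t *: x + (1 - t) *: y) = t *: (u - x) + (1 - t) *: (u - y).
  rewrite !scalerBr !scalerBl !scale1r.
  rewrite opprD !addrA; congr (_ - _). idtac.
  by rewrite [t *: u - _]addrC addrAC addrK addrC.
by apply: Kadd; apply: Kscale; rewrite ?subr_ge0.
Qed.

Section State.
Variable s : V -> R.
Hypothesis hs : is_state K u s.

Lemma s_add a b : eff_interval K u a -> eff_interval K u b -> cone_le K (a + b) u ->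
  s (a + b) = s a + s b.
Proof. by case: hs => _ _ h _; apply: h. Qed.
Arguments s_add {a b}.
Lemma s_ge0 a : eff_interval K u a -> 0 <= s a.
Proof. by case: hs => h _ _ _ /h /andP[]. Qed.
Lemma s_le1 a : eff_interval K u a -> s a <= 1.
Proof. by case: hs => h _ _ _ /h /andP[]. Qed.
Arguments s_ge0 {a}.
Arguments s_le1 {a}.
Lemma s_u : s u = 1.
Proof. by case: hs. Qed.

Lemma s_nat x (n k : nat) : eff_interval K u x -> (k <= n.+1)%N ->
  s ((k%:R / n.+1%:R) *: x) = k%:R * s ((1 / n.+1%:R) *: x).
Proof.
move=> Ex; elim: k => [|k IH] hk.
  rewrite mul0r scale0r mul0r.
  have := s_add E0 E0; rewrite addr0 => h; have := h (proj2 E0).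
  lra.
have hk' : (k <= n.+1)%N by apply: ltnW.
have Nn : 0 < n.+1%:R :> R by rewrite ltr0n.
have r01 : forall j, (j <= n.+1)%N -> 0 <= (j%:R : R) / n.+1%:R <= 1.
  move=> j hj; rewrite divr_ge0 ?ler0n //=; rewrite ler_pdivrMr // mul1r ler_nat //.
have e1 : eff_interval K u ((k%:R / n.+1%:R) *: x) by apply: E_scale => //; apply: r01.
have e2 : eff_interval K u ((1 / n.+1%:R) *: x).
  by apply: E_scale => //; rewrite -[1]/(1%:R); apply: r01.
have e3 : eff_interval K u ((k.+1%:R / n.+1%:R) *: x) by apply: E_scale => //; apply: r01.
have eq : (k.+1%:R / n.+1%:R) *: x = (k%:R / n.+1%:R) *: x + (1 / n.+1%:R) *: x.
  by rewrite -scalerDl -mulrDl -natr1.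
rewrite eq s_add //; last by rewrite -eq; case: e3.
have -> : k.+1%:R = k%:R + 1 :> R by rewrite natr1.
rewrite IH //; lra.
Qed.

Lemma s_frac x (n k : nat) : eff_interval K u x -> (k <= n.+1)%N ->
  n.+1%:R * s ((k%:R / n.+1%:R) *: x) = k%:R * s x.
Proof.
move=> Ex hk.
have Nn : n.+1%:R != 0 :> R by rewrite pnatr_eq0.
have h1 := @s_nat x n n.+1 Ex (leqnn n.+1).
rewrite divff // scale1r in h1.
by rewrite s_nat // h1 mulrCA.
Qed.

Lemma s_low x t (n : nat) : eff_interval K u x -> 0 <= t <= 1 ->
  t * n.+1%:R * s x - s x <= n.+1%:R * s (t *: x).
Proof.
move=> Ex /andP[t0 t1].
have Nn : 0 < n.+1%:R :> R by rewrite ltr0n.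
set k := Num.truncn (t * n.+1%:R).
have /andP[hk1 hk2] : k%:R <= t * n.+1%:R < k.+1%:R by apply: truncn_itv; rewrite mulr_ge0 // ltW.
have kn : (k <= n.+1)%N.
  rewrite -(ler_nat R); apply: (le_trans hk1); nra.
have hf := @s_frac x n k Ex kn.
have kt : k%:R / n.+1%:R <= t by rewrite ler_pdivrMr.
have eq : t *: x = (k%:R / n.+1%:R) *: x + (t - k%:R / n.+1%:R) *: x.
  by rewrite -scalerDl subrKC.
have e1 : eff_interval K u ((k%:R / n.+1%:R) *: x).
  apply: E_scale => //; rewrite divr_ge0 ?ler0n //=; exact: le_trans kt t1.
have e2 : eff_interval K u ((t - k%:R / n.+1%:R) *: x).
  apply: E_scale => //; rewrite subr_ge0 kt /=.
  apply: le_trans t1; rewrite gerBl divr_ge0 ?ler0n //.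
have e3 : eff_interval K u (t *: x) by apply: E_scale => //; rewrite t0 t1.
have sx0 := s_ge0 Ex.
have s20 := s_ge0 e2.
rewrite eq s_add //; last by rewrite -eq; case: e3.
have hk3 : t * n.+1%:R - k%:R - 1 < 0.
  by move: hk2; rewrite -natr1; lra.
nra.
Qed.

Lemma s_hom x t : eff_interval K u x -> 0 <= t <= 1 -> s (t *: x) = t * s x.
Proof.
move=> Ex /andP[t0 t1].
apply/eqP; rewrite -subr_eq0; apply/eqP; apply: small0' => n.
have Nn : 0 < n.+1%:R :> R by rewrite ltr0n.
have l1 := @s_low x t n Ex; rewrite t0 t1 in l1.
have l2 := @s_low x (1 - t) n Ex.
rewrite subr_ge0 t1 gerBl t0 in l2.
have e3 : eff_interval K u (t *: x) by apply: E_scale => //; rewrite t0 t1.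
have e4 : eff_interval K u ((1 - t) *: x) by apply: E_scale => //; rewrite subr_ge0 t1 gerBl t0.
have sum : s (t *: x) + s ((1 - t) *: x) = s x.
  rewrite -s_add //; first by rewrite -scalerDl subrKC scale1r.
  by rewrite -scalerDl subrKC scale1r; case: Ex.
have sx0 := s_ge0 Ex.
have sx1 := s_le1 Ex.
have := l1 isT; have := l2 isT => {l1 l2} l2 l1.
rewrite ler_norml.
apply/andP; split; nra.
Qed.

Lemma s_aff x y t : eff_interval K u x -> eff_interval K u y -> 0 <= t <= 1 ->
  s (t *: x + (1 - t) *: y) = t * s x + (1 - t) * s y.
Proof.
move=> Ex Ey /andP[t0 t1].
have e3 : eff_interval K u (t *: x) by apply: E_scale => //; rewrite t0 t1.
have e4 : eff_interval K u ((1 - t) *: y) by apply: E_scale => //; rewrite subr_ge0 t1 gerBl t0.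
have tt : 0 <= t <= 1 by rewrite t0 t1.
have c : cone_le K (t *: x + (1 - t) *: y) u by case: (@E_conv t x y tt Ex Ey).
rewrite s_add //.
by rewrite !s_hom // ?t0 ?t1 // subr_ge0 t1 gerBl t0.
Qed.

End State.
End St.

Lemma od_eq (R : realType) (V : lmodType R) (K : V -> Prop) (u : V) :
  positive_cone K -> order_determining K u -> forall a b,
  eff_interval K u a -> eff_interval K u b ->
  (forall s, is_state K u s -> s a = s b) -> a = b.
Proof.
move=> [_ _ hp] hod a b Ea Eb hs.
have h1 : cone_le K a b by apply/(hod a b Ea Eb) => s /hs ->.
have h2 : cone_le K b a by apply/(hod b a Eb Ea) => s /hs ->.
move: h1 h2; rewrite /cone_le => h1 h2.
have := hp _ h1; rewrite opprB => /(_ h2) /eqP; rewrite subr_eq0 => /eqP.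
by [].
Qed.

Arguments od_eq {R V K u}.
Unset Implicit Arguments. Set Strict Implicit.

Theorem lemma3p1 (R : realType) (V1 V2 : lmodType R)
  (K1 : V1 -> Prop) (u1 : V1) (K2 : V2 -> Prop) (u2 : V2)
  (hK1 : positive_cone K1) (hu1K : K1 u1) (hu1 : u1 <> 0)
  (hK2 : positive_cone K2) (hu2K : K2 u2) (hu2 : u2 <> 0)
  (hgen1 : generates K1 u1) (hgen2 : generates K2 u2)
  (hod1 : order_determining K1 u1) (hod2 : order_determining K2 u2)
  (hun1 : unrestricted K1 u1) (hun2 : unrestricted K2 u2)
  (I : (V1 -> R) -> (V2 -> R)) (hI : is_operation K1 u1 K2 u2 I) :
  exists J : V2 -> V1,
    [/\ dual_of K1 u1 K2 u2 I J,
        (forall J', dual_of K1 u1 K2 u2 I J' -> forall a, eff_interval K2 u2 a -> J' a = J a) &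
        (is_channel K1 u1 K2 u2 I <-> J u2 = u1)].
Proof.
case: hI => hIs hIa.
have H : forall a, exists b, eff_interval K2 u2 a ->
    eff_interval K1 u1 b /\ forall s, is_state K1 u1 s -> I s a = s b.
  move=> a; case: (classic (eff_interval K2 u2 a)) => Ea; last by exists 0.
  have hb1 : forall s, is_state K1 u1 s -> 0 <= (fun s => I s a) s <= 1.
    move=> s /hIs [l [s' [/andP[l0 l1] [hs' hIe]]]] /=; rewrite hIe.
    have := s_ge0 hs' Ea; have := s_le1 hs' Ea => p1 p0.
    rewrite /=; apply/andP; split; nra.
  have hb2 : forall s1 s2 (t : R), is_state K1 u1 s1 -> is_state K1 u1 s2 -> 0 <= t <= 1 ->
        (fun s => I s a) (fconv t s1 s2) = t * (fun s => I s a) s1 + (1 - t) * (fun s => I s a) s2.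
    by move=> s1 s2 t hs1 hs2 ht /=; rewrite hIa.
  have [b [Eb hb]] := hun1 _ hb1 hb2.
  by exists b.
pose J := fun a => proj1_sig (constructive_indefinite_description _ (H a)).
have HJ : forall a, eff_interval K2 u2 a ->
    eff_interval K1 u1 (J a) /\ forall s, is_state K1 u1 s -> I s a = s (J a).
  by move=> a; rewrite /J; case: (constructive_indefinite_description _ _).
have dJ : dual_of K1 u1 K2 u2 I J.
  split; last by move=> s a hs Ea; case: (HJ a Ea) => _ ->.
  split; first by move=> a /HJ [].
  move=> a b t Ea Eb ht.
  have Ec := E_conv hK2 ht Ea Eb.
  have [Ja hJa] := HJ a Ea; have [Jb hJb] := HJ b Eb; have [Jc hJc] := HJ _ Ec.
  apply: (od_eq hK1 hod1) => //; first exact: E_conv.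
  move=> s hs.
  rewrite -hJc // (s_aff hK1 hu1K hs Ja Jb ht) -hJa // -hJb //.
  have [l [s' [_ [hs' ->]]]] := hIs s hs.
  rewrite (s_aff hK2 hu2K hs' Ea Eb ht); ring.
exists J; split => //.
  move=> J' [[hE' _] hd'] a Ea.
  apply: (od_eq hK1 hod1); [exact: hE'| by case: (HJ a Ea)|].
  by move=> s hs; rewrite hd' //; case: (HJ a Ea) => _ ->.
have Eu2 := Eu hK2 hu2K; have Eu1 := Eu hK1 hu1K.
split.
  case=> _ hch; apply: (od_eq hK1 hod1) => //; first by case: (HJ _ Eu2).
  move=> s hs; case: (HJ _ Eu2) => _ <- //.
  by rewrite (s_u hs) (s_u (hch s hs)).
move=> hJu; split; first by split.
move=> s hs.
have [l [s' [_ [hs' hIe]]]] := hIs s hs.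
have : I s u2 = 1 by case: (HJ _ Eu2) => _ ->; rewrite // hJu (s_u hs).
rewrite hIe (s_u hs') mulr1 => hl.
rewrite hl.
have -> : (fun x => 1 * s' x) = s' by apply: functional_extensionality => x; rewrite mul1r.
exact: hs'.
Qed.
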